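(* Let $(g_\alpha)_{\alpha<\omega_1}\subset\mathcal{I}$. Then there exists $(f_\alpha)_{\alpha<\omega_1}\subset\mathcal{I}$ such that (1) $f_\alpha(n)\le g_\alpha(n)$ for all $\alpha<\omega_1$ and $n\in\mathbb{N}$, and (2) $j(f_\beta)\subset^a j(f_\alpha)$ for all $\alpha<\beta<\omega_1$.
   Context: $\mathcal{I}$ is the class of all non-decreasing maps $f:\mathbb{N}\to\mathbb{N}\cup\{0\}$ with $f(1)=0$, $\lim_{n\to\infty}f(n)=\infty$, and $f(n+1)\le f(n)+1$ for all $n$. The map $j:\mathcal{I}\to[\mathbb{N}]^\omega$ (infinite subsets of $\mathbb{N}$) is $j(f)=\{n\in\mathbb{N}:f(n+1)>f(n)\}$. For infinite $A,B\subset\mathbb{N}$, $A\subset^a B$ means $A\setminus B$ is finite. *)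

(* Defs.v *)
(* Natural numbers ℕ = {1,2,...} are represented by Rocq's nat
   restricted to n >= 1; values of functions at 0 are irrelevant. *)
From Stdlib Require Import Arith.

Definition in_I (f : nat -> nat) : Prop :=
  f 1 = 0 /\
  (forall n, 1 <= n -> f n <= f (S n)) /\
  (forall n, 1 <= n -> f (S n) <= f n + 1) /\
  (forall m, exists N, 1 <= N /\ forall n, N <= n -> m <= f n).

Definition j (f : nat -> nat) : nat -> Prop :=
  fun n => 1 <= n /\ f n < f (S n).

Definition almost_subset (A B : nat -> Prop) : Prop :=
  exists N, forall n, N <= n -> A n -> B n.

(* (W, lt) is (order-isomorphic to) ω₁: an uncountable well-order all of
   whose proper initial segments are countable. *)
Definition is_omega1 (W : Type) (lt : W -> W -> Prop) : Prop :=
  (forall x, ~ lt x x) /\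
  (forall x y z, lt x y -> lt y z -> lt x z) /\
  (forall x y, lt x y \/ x = y \/ lt y x) /\
  well_founded lt /\
  (~ exists h : W -> nat, forall x y, h x = h y -> x = y) /\
  (forall b : W, exists h : W -> nat,
      forall x y, lt x b -> lt y b -> h x = h y -> x = y).

(* Main.v *)
Require Import Defs.
From Stdlib Require Import Arith.
From Stdlib Require Import Lia Classical ClassicalEpsilon ClassicalDescription FunctionalExtensionality.

Fixpoint cnt (X : nat -> Prop) (n : nat) : nat :=
  match n with
  | 0 => 0
  | S m => cnt X m + (if excluded_middle_informative (1 <= m /\ X m) then 1 else 0)
  end.

Definition inf (X : nat -> Prop) := forall N, exists n, N <= n /\ X n.
Definition sparse (G : nat -> nat) (X : nat -> Prop) := forall n, 1 <= n -> cnt X n <= G n.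

Lemma cnt_in X n : 1 <= n -> X n -> cnt X (S n) = cnt X n + 1.
Proof. intros. simpl. destruct (excluded_middle_informative _); tauto. Qed.

Lemma cnt_notin X n : ~ (1 <= n /\ X n) -> cnt X (S n) = cnt X n.
Proof. intros. simpl. destruct (excluded_middle_informative _); [tauto| lia]. Qed.

Lemma cnt_step X n : cnt X n <= cnt X (S n) <= cnt X n + 1.
Proof. simpl. destruct (excluded_middle_informative _); lia. Qed.

Lemma cnt_mono X n m : n <= m -> cnt X n <= cnt X m.
Proof.
  induction 1; auto. pose proof (cnt_step X m). lia.
Qed.

Lemma j_cnt X n : j (cnt X) n <-> 1 <= n /\ X n.
Proof.
  unfold j. split.
  - intros [H1 H2]. split; auto. destruct (classic (X n)); auto.
    rewrite cnt_notin in H2; [lia | tauto].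
  - intros [H1 H2]. split; auto. rewrite cnt_in; auto. lia.
Qed.

Lemma cnt_inI X : inf X -> in_I (cnt X).
Proof.
  intro HX. split; [|split; [|split]].
  - simpl. destruct (excluded_middle_informative _); lia.
  - intros. pose proof (cnt_step X n). lia.
  - intros. pose proof (cnt_step X n). lia.
  - induction m.
    + exists 1. split; auto. lia.
    + destruct IHm as [N [HN1 HN2]].
      destruct (HX (N + 1)) as [n0 [Hn0 Xn0]].
      exists (S n0). split; [lia|]. intros n Hn.
      pose proof (cnt_mono X _ _ Hn). rewrite cnt_in in H by (auto; lia).
      specialize (HN2 n0 ltac:(lia)). lia.
Qed.

Lemma inI_mono g : in_I g -> forall a c, 1 <= a -> a <= c -> g a <= g c.
Proof.
  intros [_ [Hm _]] a c Ha Hc. induction Hc; auto.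
  specialize (Hm m ltac:(lia)). lia.
Qed.

Lemma smono (b : nat -> nat) : (forall k, b k < b (S k)) -> forall k m, k < m -> b k < b m.
Proof.
  intros Hb k m H. induction H; auto. specialize (Hb m). lia.
Qed.

Lemma range_sparse G (HG : in_I G) (b : nat -> nat) (Hb0 : 1 <= b 0)
  (Hbs : forall k, b k < b (S k)) (Hbg : forall k, S k <= G (S (b k))) :
  sparse G (fun n => exists k, b k = n).
Proof.
  set (B := fun n => exists k, b k = n).
  assert (Inv : forall n, cnt B n = 0 \/ exists k, cnt B n <= S k /\ b k < n).
  { induction n.
    - left. reflexivity.
    - destruct (classic (1 <= n /\ B n)) as [Hin|Hin].
      + rewrite cnt_in by tauto. destruct Hin as [_ [m Hm]].
        right. exists m. split; [|lia].
        destruct IHn as [E|[k [Hk1 Hk2]]]; [lia|].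
        assert (k < m).
        { destruct (Nat.lt_ge_cases k m); auto.
          destruct (Nat.eq_dec k m); [subst; lia|].
          pose proof (smono b Hbs m k ltac:(lia)). lia. }
        lia.
      + rewrite cnt_notin by auto.
        destruct IHn as [E|[k [Hk1 Hk2]]]; [left; auto| right; exists k; split; lia]. }
  intros n Hn. destruct (Inv n) as [E|[k [Hk1 Hk2]]]; [lia|].
  pose proof (Hbg k). pose proof (inI_mono G HG (S (b k)) n ltac:(lia) ltac:(lia)). lia.
Qed.

Lemma asub_refl X : almost_subset X X.
Proof. exists 0. auto. Qed.

Lemma asub_trans X Y Z : almost_subset X Y -> almost_subset Y Z -> almost_subset X Z.
Proof.
  intros [N1 H1] [N2 H2]. exists (N1 + N2). intros n Hn Xn.
  apply H2; [lia|]. apply H1; [lia|auto].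
Qed.

Lemma asub_inter D P Q : almost_subset D P -> almost_subset D Q ->
  almost_subset D (fun m => P m /\ Q m).
Proof.
  intros [N1 H1] [N2 H2]. exists (N1 + N2). intros n Hn Xn.
  split; [apply H1|apply H2]; auto; lia.
Qed.

Lemma inf_asub D Y : inf D -> almost_subset D Y -> inf Y.
Proof.
  intros HD [N HN] M. destruct (HD (N + M)) as [n [Hn Dn]].
  exists n. split; [lia|]. apply HN; auto; lia.
Qed.

Fixpoint Cint (X : nat -> nat -> Prop) (k : nat) : nat -> Prop :=
  match k with
  | 0 => fun _ => True
  | S k => fun m => Cint X k m /\ X k m
  end.

Lemma Cint_in X i k m : i < k -> Cint X k m -> X i m.
Proof.
  induction k; intros H HC; [lia|]. destruct HC as [HC Hx].
  destruct (Nat.eq_dec i k); [subst; auto|]. apply IHk; auto; lia.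
Qed.

Fixpoint iterseq (s : nat -> nat -> nat) (k : nat) : nat :=
  match k with
  | 0 => s 0 0
  | S k' => s (S k') (iterseq s k')
  end.

Lemma build (W : Type) (lt : W -> W -> Prop)
  (tri : forall x y, lt x y \/ x = y \/ lt y x)
  (a : W) (h : W -> nat) (hinj : forall x y, lt x a -> lt y a -> h x = h y -> x = y)
  (A : W -> nat -> Prop) (Ainf : forall b, lt b a -> inf (A b))
  (Ach : forall b c, lt b a -> lt c a -> lt b c -> almost_subset (A c) (A b))
  (G : nat -> nat) (HG : in_I G) :
  exists B, inf B /\ sparse G B /\ forall b, lt b a -> almost_subset B (A b).
Proof.
  assert (He : exists e : nat -> option W,
             (forall n x, e n = Some x -> lt x a) /\
             (forall x, lt x a -> e (h x) = Some x)).
  { exists (fun n => match excluded_middle_informative (exists x, lt x a /\ h x = n) with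
                     | left H => Some (proj1_sig (constructive_indefinite_description _ H))
                     | right _ => None end).
    split.
    - intros n x. destruct (excluded_middle_informative _) as [H|H]; [|discriminate].
      destruct (constructive_indefinite_description _ H) as [y [Hy1 Hy2]]. simpl.
      intro E; injection E; intros; subst; auto.
    - intros x Hx. destruct (excluded_middle_informative _) as [H|H].
      + destruct (constructive_indefinite_description _ H) as [y [Hy1 Hy2]]. simpl.
        f_equal. apply hinj; auto.
      + exfalso. apply H. exists x. auto. }
  destruct He as [e [He1 He2]].
  set (X := fun n => match e n with Some x => A x | None => fun _ : nat => True end).
  assert (Inv : forall k, exists D, inf D /\ almost_subset D (Cint X k) /\
            forall b, lt b a -> almost_subset D (A b) \/ almost_subset (A b) D).
  { induction k.
    - exists (fun _ => True). split; [intro N; exists N; auto|]. split.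
      + exists 0; simpl; auto.
      + intros. right. exists 0. auto.
    - destruct IHk as [D [HD1 [HD2 HD3]]]. simpl.
      unfold X at 2. destruct (e k) as [x|] eqn:Ek.
      + pose proof (He1 _ _ Ek) as Hx.
        destruct (HD3 x Hx) as [Hc|Hc].
        * exists D. split; auto. split; auto. apply asub_inter; auto.
        * exists (A x). split; [auto|]. split.
          -- apply asub_inter; [apply asub_trans with D; auto | apply asub_refl].
          -- intros b Hb. destruct (tri b x) as [H|[H|H]].
             ++ left. apply Ach; auto.
             ++ subst. left. apply asub_refl.
             ++ right. apply Ach; auto.
      + exists D. split; auto. split; auto. apply asub_inter; auto.
        exists 0; auto. }
  assert (Hs : forall k p, exists n, p < n /\ Cint X (S k) n /\ S k <= G (S n)).
  { intros k p. destruct (Inv (S k)) as [D [HD1 [HD2 _]]].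
    pose proof (inf_asub _ _ HD1 HD2) as HC.
    destruct HG as [_ [_ [_ Hinf]]]. destruct (Hinf (S k)) as [N [_ HN]].
    destruct (HC (N + S p)) as [n [Hn Cn]]. exists n. split; [lia|]. split; auto.
    apply HN. lia. }
  set (sel := fun k p => proj1_sig (constructive_indefinite_description _ (Hs k p))).
  assert (Hsel : forall k p, p < sel k p /\ Cint X (S k) (sel k p) /\ S k <= G (S (sel k p))).
  { intros. unfold sel. destruct (constructive_indefinite_description _ _). simpl. auto. }
  set (b := iterseq sel).
  assert (Hb0 : 1 <= b 0). { unfold b; simpl. pose proof (Hsel 0 0). lia. }
  assert (Hbs : forall k, b k < b (S k)). { intro k. unfold b; simpl. apply Hsel. }
  assert (HbC : forall k, Cint X (S k) (b k) /\ S k <= G (S (b k))).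
  { intro k. destruct k; unfold b; [exact (proj2 (Hsel 0 0))| exact (proj2 (Hsel (S k) _))]. }
  assert (Hbk : forall k, k <= b k).
  { induction k; [lia|]. specialize (Hbs k). lia. }
  exists (fun n => exists k, b k = n). split; [|split].
  - intro N. exists (b N). split; eauto.
  - apply range_sparse; auto. intro k. apply HbC.
  - intros c Hc. exists (b (h c)). intros n Hn [k Hk]. subst n.
    assert (h c <= k).
    { destruct (Nat.le_gt_cases (h c) k); auto.
      pose proof (smono b Hbs k (h c) H). lia. }
    pose proof (Cint_in X (h c) (S k) (b k) ltac:(lia) (proj1 (HbC k))) as HX.
    unfold X in HX. rewrite He2 in HX; auto.
Qed.

Theorem lemma3p5 (W : Type) (lt : W -> W -> Prop) (HW : is_omega1 W lt)
  (g : W -> nat -> nat) (Hg : forall a, in_I (g a)) :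
  exists f : W -> nat -> nat,
    (forall a, in_I (f a)) /\
    (forall a n, 1 <= n -> f a n <= g a n) /\
    (forall a b, lt a b -> almost_subset (j (f b)) (j (f a))).
Proof.
  destruct HW as [irr [trans [tri [wf [_ Hcnt]]]]].
  set (Good := fun a (rec : forall b, lt b a -> nat -> Prop) (B : nat -> Prop) =>
         inf B /\ sparse (g a) B /\ forall b (H : lt b a), almost_subset B (rec b H)).
  set (Fstep := fun a (rec : forall b, lt b a -> nat -> Prop) =>
         epsilon (inhabits (fun _ : nat => True)) (Good a rec)).
  set (A := Fix wf (fun _ => nat -> Prop) Fstep).
  assert (HA : forall a, Good a (fun b _ => A b) (A a)).
  { intro a. induction a as [a IH] using (well_founded_ind wf).
    assert (E : A a = Fstep a (fun b _ => A b)).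
    { unfold A. apply (Fix_eq wf (fun _ => nat -> Prop) Fstep). intros x f1 f2 Hf.
      assert (f1 = f2) by (extensionality y; extensionality p; auto).
      subst. reflexivity. }
    rewrite E. unfold Fstep. apply epsilon_spec.
    destruct (Hcnt a) as [h hinj].
    destruct (build W lt tri a h (fun x y Hx Hy => hinj x y Hx Hy) A
                (fun b Hb => proj1 (IH b Hb))
                (fun b c Hb Hc Hbc => proj2 (proj2 (IH c Hc)) b Hbc)
                (g a) (Hg a)) as [B [HB1 [HB2 HB3]]].
    exists B. split; auto. }
  exists (fun a => cnt (A a)). split; [|split].
  - intro a. apply cnt_inI. apply HA.
  - intros a n Hn. apply HA; auto.
  - intros a b Hab. destruct (proj2 (proj2 (HA b)) a Hab) as [N HN].
    exists N. intros n Hn Hj. apply j_cnt in Hj. apply j_cnt. split; [tauto|].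
    apply HN; tauto.
Qed.
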